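(* Let $A_1$ and $A_2$ be algebras of the same dimension $n$ and let $K:A_1\to A_2$ be an algebra isomorphism, identified with its (nonsingular) $n\times n$ matrix in the standard bases. Then $$\mathfrak{u}_{A_1}=K^T\mathfrak{u}_{A_2}K:=\{K^TLK:\ L\in\mathfrak{u}_{A_2}\}.$$
   Context: Throughout, an ''algebra'' is a real finite-dimensional unital associative algebra whose underlying vector space is $\mathbb{R}^n$ ($n\ge1$), with the standard basis and standard topology; elements are written as column vectors $s=(x_1,\dots,x_n)^T$, and $\mathbf{d}s=(dx_1,\dots,dx_n)^T$. The multiplicative identity is $\mathbf{1}_A$. An uncurling metric of $A$ is a real symmetric $n\times n$ matrix $L$ such that the differential 1-form $(s^{-1})^TL\,\mathbf{d}s=\sum_i (Ls^{-1})_i\,dx_i$ is closed, i.e. $d\big((s^{-1})^TL\,\mathbf{d}s\big)=0$, on an open ball centered at $\mathbf{1}_A$ consisting only of units (here $s^{-1}$ is the multiplicative inverse of $s$ in $A$). The anti-rotor $\mathfrak{u}_A$ is the real vector space of all uncurling metrics of $A$. *)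

(* Defs.v *)
From HB Require Import structures.
From mathcomp Require Import all_boot all_order all_algebra.
From mathcomp Require Import boolp classical_sets reals topology normedtype derive.
Set Implicit Arguments. Unset Strict Implicit. Unset Printing Implicit Defensive.
Import Order.TTheory GRing.Theory Num.Theory numFieldNormedType.Exports.
Local Open Scope ring_scope.

Record algebra (R : realType) (n : nat) := Algebra {
  amul : 'cV[R]_n -> 'cV[R]_n -> 'cV[R]_n;
  aone : 'cV[R]_n;
  amul_linl : forall (a : R) (x y z : 'cV[R]_n),
      amul (a *: x + y) z = a *: amul x z + amul y z;
  amul_linr : forall (a : R) (x y z : 'cV[R]_n),
      amul z (a *: x + y) = a *: amul z x + amul z y;
  amulA : forall x y z, amul x (amul y z) = amul (amul x y) z;
  amul1l : forall x, amul aone x = x;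
  amul1r : forall x, amul x aone = x
}.

Section Defs.
Variables (R : realType) (n : nat).

Definition is_unit (A : algebra R n) (s : 'cV[R]_n) : Prop :=
  exists t, amul A s t = aone A /\ amul A t s = aone A.

(* multiplicative inverse (0 on non-units; only used on units) *)
Definition ainv (A : algebra R n) (s : 'cV[R]_n) : 'cV[R]_n :=
  match pselect (exists t, amul A s t = aone A /\ amul A t s = aone A) with
  | left h => projT1 (cid h)
  | right _ => 0
  end.

Definition eball (c : 'cV[R]_n) (r : R) : set 'cV[R]_n :=
  [set s | \sum_(i < n) (s i 0 - c i 0) ^+ 2 < r ^+ 2].

Definition pderiv (f : 'cV[R]_n -> R) (j : 'I_n) (s : 'cV[R]_n) : R :=
  derive1 (fun t : R => f (s + t *: delta_mx j 0)) 0.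

Definition pderivable (f : 'cV[R]_n -> R) (j : 'I_n) (s : 'cV[R]_n) : Prop :=
  derivable (fun t : R => f (s + t *: delta_mx j 0)) 0 1.

(* the 1-form sum_i w_i dx_i is closed on B: d w = 0, i.e. the
   partial derivatives exist and d_j w_i = d_i w_j on B *)
Definition closed_form_on (w : 'I_n -> 'cV[R]_n -> R) (B : set 'cV[R]_n) : Prop :=
  forall s, B s -> forall i j : 'I_n,
    pderivable (w i) j s /\ pderivable (w j) i s /\
    pderiv (w i) j s = pderiv (w j) i s.

(* uncurling metric: symmetric L with (s^{-1})^T L ds closed on an open
   ball centered at 1_A consisting only of units *)
Definition uncurling_metric (A : algebra R n) (L : 'M[R]_n) : Prop :=
  L^T = L /\
  exists r : R, 0 < r /\
    (forall s, eball (aone A) r s -> is_unit A s) /\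
    closed_form_on (fun i s => (L *m ainv A s) i 0) (eball (aone A) r).

Definition alg_iso (A1 A2 : algebra R n) (K : 'M[R]_n) : Prop :=
  K \in unitmx /\
  (forall x y, K *m amul A1 x y = amul A2 (K *m x) (K *m y)) /\
  K *m aone A1 = aone A2.

End Defs.

(* Main.v *)
Require Import Defs.
From HB Require Import structures.
From mathcomp Require Import all_boot all_order all_algebra.
From mathcomp Require Import boolp classical_sets reals topology normedtype derive.
From mathcomp Require Import lra ring.
Set Implicit Arguments. Unset Strict Implicit. Unset Printing Implicit Defensive.
Import Order.TTheory GRing.Theory Num.Theory numFieldNormedType.Exports.
Local Open Scope classical_set_scope.
Local Open Scope ring_scope.

Lemma amul0l (R : realType) n (A : algebra R n) z : amul A 0 z = 0.
Proof.
have := amul_linl A (-1) 0 0 z.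
by rewrite scaler0 addr0 scaleN1r addNr.
Qed.

Lemma amul0r (R : realType) n (A : algebra R n) z : amul A z 0 = 0.
Proof.
have := amul_linr A (-1) 0 0 z.
by rewrite scaler0 addr0 scaleN1r addNr.
Qed.

Lemma amulDl (R : realType) n (A : algebra R n) x y z : amul A (x + y) z = amul A x z + amul A y z.
Proof. by have := amul_linl A 1 x y z; rewrite !scale1r. Qed.
Lemma amulDr (R : realType) n (A : algebra R n) x y z : amul A z (x + y) = amul A z x + amul A z y.
Proof. by have := amul_linr A 1 x y z; rewrite !scale1r. Qed.
Lemma amulZl (R : realType) n (A : algebra R n) a x z : amul A (a *: x) z = a *: amul A x z.
Proof. by have := amul_linl A a x 0 z; rewrite !addr0 amul0l addr0. Qed.
Lemma amulZr (R : realType) n (A : algebra R n) a x z : amul A z (a *: x) = a *: amul A z x.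
Proof. by have := amul_linr A a x 0 z; rewrite !addr0 amul0r addr0. Qed.
Lemma amulNl (R : realType) n (A : algebra R n) x z : amul A (- x) z = - amul A x z.
Proof. by rewrite -scaleN1r amulZl scaleN1r. Qed.
Lemma amulNr (R : realType) n (A : algebra R n) x z : amul A z (- x) = - amul A z x.
Proof. by rewrite -scaleN1r amulZr scaleN1r. Qed.
Lemma amulBl (R : realType) n (A : algebra R n) x y z : amul A (x - y) z = amul A x z - amul A y z.
Proof. by rewrite amulDl amulNl. Qed.

Lemma amul_suml (R : realType) n (A : algebra R n) (F : 'I_n -> 'cV[R]_n) z :
  amul A (\sum_i F i) z = \sum_i amul A (F i) z.
Proof.
by elim/big_rec2: _ => [|i y1 y2 _ <-]; rewrite ?amul0l // amulDl.
Qed.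
Lemma amul_sumr (R : realType) n (A : algebra R n) (F : 'I_n -> 'cV[R]_n) z :
  amul A z (\sum_i F i) = \sum_i amul A z (F i).
Proof.
by elim/big_rec2: _ => [|i y1 y2 _ <-]; rewrite ?amul0r // amulDr.
Qed.

Lemma cV_sum_delta (R : realType) n (x : 'cV[R]_n) :
  x = \sum_j x j 0 *: delta_mx j 0.
Proof.
rewrite {1}(matrix_sum_delta x); apply: eq_bigr => j _.
by rewrite big_ord1.
Qed.

Definition Rm (R : realType) n (A : algebra R n) (w : 'cV[R]_n) : 'M[R]_n :=
  \matrix_(i, j) (amul A (delta_mx j 0) w) i 0.
Definition Lm (R : realType) n (A : algebra R n) (w : 'cV[R]_n) : 'M[R]_n :=
  \matrix_(i, j) (amul A w (delta_mx j 0)) i 0.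

Lemma RmE (R : realType) n (A : algebra R n) w x : Rm A w *m x = amul A x w.
Proof.
apply/matrixP => i k; rewrite (ord1 k) !mxE {2}(cV_sum_delta x) amul_suml summxE.
by apply: eq_bigr => j _; rewrite !mxE amulZl mxE mulrC.
Qed.
Lemma LmE (R : realType) n (A : algebra R n) w x : Lm A w *m x = amul A w x.
Proof.
apply/matrixP => i k; rewrite (ord1 k) !mxE {2}(cV_sum_delta x) amul_sumr summxE.
by apply: eq_bigr => j _; rewrite !mxE amulZr mxE mulrC.
Qed.

Lemma mx_ext (R : realType) n (M M' : 'M[R]_n) :
  (forall x : 'cV[R]_n, M *m x = M' *m x) -> M = M'.
Proof.
move=> H; apply/matrixP => i j.
have := congr1 (fun X : 'cV[R]_n => X i 0) (H (delta_mx j 0)).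
by rewrite -!colE !mxE.
Qed.

Lemma ainvP (R : realType) n (A : algebra R n) s : is_unit A s ->
  amul A s (ainv A s) = aone A /\ amul A (ainv A s) s = aone A.
Proof. by rewrite /ainv; case: pselect => // h _; exact: (projT2 (cid h)). Qed.

Lemma ainv_uniq (R : realType) n (A : algebra R n) s t :
  amul A s t = aone A -> amul A t s = aone A -> ainv A s = t.
Proof.
move=> h1 h2; have [u1 u2] := ainvP (ex_intro _ t (conj h1 h2)).
by rewrite -[LHS](amul1r A) -h1 amulA u2 amul1l.
Qed.

Definition nrm (R : realType) n (x : 'cV[R]_n) : R := \sum_i `|x i 0|.
Definition cM (R : realType) n (M : 'M[R]_n) : R := \sum_i \sum_j `|M i j|.

Lemma nrm_ge0 (R : realType) n (x : 'cV[R]_n) : 0 <= nrm x.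
Proof. by apply: sumr_ge0 => i _. Qed.
Lemma cM_ge0 (R : realType) n (M : 'M[R]_n) : 0 <= cM M.
Proof. by apply: sumr_ge0 => i _; apply: sumr_ge0. Qed.
Lemma nrmD (R : realType) n (x y : 'cV[R]_n) : nrm (x + y) <= nrm x + nrm y.
Proof. rewrite /nrm -big_split /=; apply: ler_sum => i _; rewrite mxE; exact: ler_normD. Qed.
Lemma nrmZ (R : realType) n a (x : 'cV[R]_n) : nrm (a *: x) = `|a| * nrm x.
Proof. rewrite /nrm mulr_sumr; apply: eq_bigr => i _; by rewrite mxE normrM. Qed.
Lemma nrmN (R : realType) n (x : 'cV[R]_n) : nrm (- x) = nrm x.
Proof. rewrite /nrm; apply: eq_bigr => i _; by rewrite mxE normrN. Qed.
Lemma entry_le_nrm (R : realType) n (x : 'cV[R]_n) i : `|x i 0| <= nrm x.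
Proof. by rewrite /nrm (bigD1 i) //= lerDl sumr_ge0. Qed.
Lemma entry_le_cM (R : realType) n (M : 'M[R]_n) i j : `|M i j| <= cM M.
Proof.
rewrite /cM (bigD1 i) //= (bigD1 j) //= -addrA lerDl addr_ge0 //.
  by apply: sumr_ge0. by apply: sumr_ge0 => k _; apply: sumr_ge0.
Qed.
Lemma entry_bound (R : realType) n (M : 'M[R]_n) (x : 'cV[R]_n) i :
  `|(M *m x) i 0| <= cM M * nrm x.
Proof.
rewrite mxE; apply: le_trans (ler_norm_sum _ _ _) _.
rewrite /nrm mulr_sumr; apply: ler_sum => j _; rewrite normrM.
by apply: ler_wpM2r => //; exact: entry_le_cM.
Qed.
Lemma nrm_bound (R : realType) n (M : 'M[R]_n) (x : 'cV[R]_n) :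
  nrm (M *m x) <= n%:R * cM M * nrm x.
Proof.
rewrite {1}/nrm -mulrA.
have -> : (n%:R * (cM M * nrm x)) = \sum_(i < n) (cM M * nrm x).
  by rewrite sumr_const card_ord mulr_natl.
by apply: ler_sum => i _; exact: entry_bound.
Qed.

Lemma deriv_inv (R : realType) n (A : algebra R n) s v (L : 'M[R]_n) i (δ : R) :
  0 < δ -> (forall t : R, `|t| < δ -> is_unit A (s + t *: v)) ->
  is_derive (0:R) (1:R) (fun t : R => (L *m ainv A (s + t *: v)) i 0)
     (- (L *m amul A (amul A (ainv A s) v) (ainv A s)) i 0).
Proof.
move=> d0 hU.
have hs : is_unit A s by have := hU 0; rewrite normr0 scale0r addr0; apply.
set u := ainv A s; have [su us] := ainvP hs.
pose g t := ainv A (s + t *: v).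
pose P := Rm A u *m Rm A v.
have key : forall t, `|t| < δ -> g t = u - t *: (P *m g t).
  move=> t ht.
  have [a1 a2] : amul A (s + t *: v) (g t) = aone A /\ amul A (g t) (s + t *: v) = aone A.
    exact: ainvP (hU t ht).
  rewrite -mulmxA RmE RmE.
  have e1 : g t = amul A (amul A (g t) s) u by rewrite -amulA su amul1r.
  have h : u = amul A (amul A (g t) s) u + t *: amul A (amul A (g t) v) u.
    by rewrite -amulZl -amulZr -amulDl -amulDr a2 amul1l.
  by apply/esym; rewrite {1}h addrK -e1.
have bnd : forall t, `|t| < δ -> `|t| * (n%:R * cM P) <= 1/2 -> nrm (g t) <= 2 * nrm u.
  move=> t ht hk.
  have h1 := nrmD u (- (t *: (P *m g t))); rewrite -key // nrmN nrmZ in h1.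
  have h2 := nrm_bound P (g t); have h3 := nrm_ge0 (g t); have h4 := normr_ge0 t.
  have h5 : `|t| * nrm (P *m g t) <= `|t| * (n%:R * cM P * nrm (g t)) by exact: ler_wpM2l.
  nra.
set l := - _.
have lE : l = - ((L *m P) *m u) i 0 by rewrite /l -!mulmxA RmE RmE.
have g0 : g 0 = u by rewrite /g scale0r addr0.
have cv : (fun h : R => h^-1 *: (((fun t : R => (L *m ainv A (s + t *: v)) i 0) \o shift 0) (h *: 1) - (L *m ainv A (s + 0 *: v)) i 0)) @ 0^' --> l.
  apply/cvgrPdist_lt => e e0.
  pose K := n%:R * cM P. pose C := cM (L *m P) * K * 2 * nrm u.
  have K0 : 0 <= K by rewrite /K mulr_ge0 ?cM_ge0.
  have C0 : 0 <= C by rewrite /C !mulr_ge0 ?cM_ge0 ?nrm_ge0.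
  pose d' := Num.min δ (Num.min (1 / (2 * K + 2)) (e / (C + 1))).
  have d'0 : 0 < d' by rewrite /d' !lt_min d0 /= !divr_gt0 //; lra.
  rewrite near_withinE; near=> t => tn0.
  have ht : `|t| < d' by near: t; exists d' => // y /=; rewrite sub0r normrN.
  have htd : `|t| < δ by apply: lt_le_trans ht _; rewrite /d' ge_min lexx.
  have htK : `|t| * K <= 1/2.
    have : `|t| < 1 / (2 * K + 2) by apply: lt_le_trans ht _; rewrite /d' !ge_min lexx orbT.
    rewrite ltr_pdivlMr; last lra. nra.
  have htC : `|t| * C < e.
    have : `|t| < e / (C + 1) by apply: lt_le_trans ht _; rewrite /d' !ge_min lexx !orbT.
    rewrite ltr_pdivlMr; last lra. nra.
  have ent : forall (M N : 'cV[R]_n), (M - N) i 0 = M i 0 - N i 0 by move=> M N; rewrite !mxE.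
  have entZ : forall a (M : 'cV[R]_n), (a *: M) i 0 = a * M i 0 by move=> a M; rewrite mxE.
  rewrite /= addr0 -[t%:A]/(t * 1) mulr1 -/(g t) -/(g 0) g0.
  rewrite -[t^-1 *: _]/(t^-1 * _) {1}(key t htd) mulmxBr ent addrAC subrr add0r.
  rewrite -scalemxAr entZ mulrN mulrA mulVf // mul1r.
  have E3 : g t - u = - (t *: (P *m g t)) by rewrite {1}(key t htd) addrC addKr.
  have E2 : l - - (L *m (P *m g t)) i 0 = ((L *m P) *m (g t - u)) i 0.
    by rewrite lE opprK mulmxBr ent mulmxA addrC.
  rewrite E2 E3; apply: le_lt_trans (entry_bound _ _ _) _; rewrite nrmN nrmZ.
  apply: le_lt_trans htC; rewrite /C.
  have q1 : nrm (P *m g t) <= K * (2 * nrm u).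
    by apply: le_trans (nrm_bound _ _) _; rewrite -/K; apply: ler_wpM2l => //; exact: bnd.
  rewrite mulrCA; apply: ler_wpM2l; first exact: normr_ge0.
  rewrite -!mulrA; apply: ler_wpM2l; first exact: cM_ge0.
  by rewrite mulrA.
apply: DeriveDef; first by apply/cvg_ex; exists l; exact: cv.
exact: cvg_lim cv.
Unshelve. all: by end_near.
Qed.

Lemma eball_line (R : realType) n (c x v : 'cV[R]_n) r :
  eball c r x -> exists2 δ : R, 0 < δ & forall t : R, `|t| < δ -> eball c r (x + t *: v).
Proof.
rewrite /eball /= => hx.
set a := \sum_i _ in hx.
pose b := \sum_(i < n) (x i 0 - c i 0) * v i 0.
pose cc := \sum_(i < n) v i 0 ^+ 2.
have E : forall t : R, \sum_(i < n) ((x + t *: v) i 0 - c i 0) ^+ 2 = a + t * (2 * b) + t ^+ 2 * cc.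
  move=> t; rewrite /a /b /cc mulr_sumr mulr_sumr mulr_sumr -!big_split /=.
  by apply: eq_bigr => i _; rewrite !mxE; ring.
have cc0 : 0 <= cc by apply: sumr_ge0 => i _; exact: sqr_ge0.
pose δ := Num.min 1 ((r ^+ 2 - a) / (2 * `|b| + cc + 1)).
have hb := normr_ge0 b.
have d0 : 0 < δ by rewrite /δ lt_min ltr01 /= divr_gt0 //; [rewrite subr_gt0 | lra].
exists δ => // t ht; rewrite E.
have ht1 : `|t| < 1 by apply: lt_le_trans ht _; rewrite /δ ge_min lexx.
have ht2 : `|t| < (r ^+ 2 - a) / (2 * `|b| + cc + 1).
  by apply: lt_le_trans ht _; rewrite /δ ge_min lexx orbT.
rewrite ltr_pdivlMr in ht2; last lra.
have h1 : t * (2 * b) <= `|t| * (2 * `|b|).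
  by have := ler_norm (t * (2 * b)); rewrite normrM normrM normr_nat.
have h2 : t ^+ 2 * cc <= `|t| * cc.
  apply: ler_wpM2r => //.
  by rewrite -(real_normK (num_real t)) expr2 ler_piMr // ltW.
have h3 := normr_ge0 t.
nra.
Qed.

Lemma eball_coord (R : realType) n (c x : 'cV[R]_n) r :
  0 < r -> eball c r x -> forall i, `|x i 0 - c i 0| < r.
Proof.
rewrite /eball /= => r0 hx i.
have : (x i 0 - c i 0) ^+ 2 < r ^+ 2.
  apply: le_lt_trans hx; rewrite (bigD1 i) //= lerDl; apply: sumr_ge0 => j _; exact: sqr_ge0.
move=> h; have h' : `|x i 0 - c i 0| ^+ 2 < r ^+ 2 by rewrite real_normK ?num_real.
have := normr_ge0 (x i 0 - c i 0); nra.
Qed.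

Lemma coord_eball (R : realType) n (c x : 'cV[R]_n) ρ :
  (0 < n)%N -> (forall i, `|x i 0 - c i 0| < ρ) -> eball c (ρ * n%:R) x.
Proof.
move=> hn h; rewrite /eball /=.
have ρ0 : 0 < ρ.
  by apply: le_lt_trans (h (Ordinal hn)); exact: normr_ge0.
apply: (@lt_le_trans _ _ (\sum_(i < n) ρ ^+ 2)).
  apply: ltr_sum; first by apply/hasP; exists (Ordinal hn); rewrite ?mem_index_enum.
  move=> i _; have := h i; have := normr_ge0 (x i 0 - c i 0).
  rewrite -(real_normK (num_real (x i 0 - c i 0))); nra.
rewrite sumr_const card_ord -mulr_natr.
have h1 : (1:R) <= n%:R by rewrite ler1n.
have := sqr_ge0 ρ; nra.
Qed.

Lemma pderiv_inv (R : realType) n (A : algebra R n) (L : 'M[R]_n) s c r :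
  (forall x, eball c r x -> is_unit A x) -> eball c r s -> forall i j,
  pderivable (fun x => (L *m ainv A x) i 0) j s /\
  pderiv (fun x => (L *m ainv A x) i 0) j s =
    - (L *m amul A (amul A (ainv A s) (delta_mx j 0)) (ainv A s)) i 0.
Proof.
move=> hU hs i j.
have [δ d0 hδ] := eball_line (delta_mx j 0) hs.
have D := deriv_inv L i d0 (fun t ht => hU _ (hδ t ht)).
split; first exact: (@ex_derive _ _ _ _ _ _ _ D).
by rewrite /pderiv derive1E; exact: (@derive_val _ _ _ _ _ _ _ D).
Qed.

Lemma iso_inv (R : realType) n (A1 A2 : algebra R n) K :
  alg_iso A1 A2 K -> alg_iso A2 A1 (invmx K).
Proof.
move=> [Ku [Km K1]]; split; first by rewrite unitmx_inv.
split.
  move=> x y; apply: (can_inj (mulKmx Ku)).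
  by rewrite mulKVmx // Km !mulKVmx.
by rewrite -K1 mulKmx.
Qed.

Lemma iso_ainv (R : realType) n (A1 A2 : algebra R n) K s :
  alg_iso A1 A2 K -> is_unit A1 s ->
  is_unit A2 (K *m s) /\ ainv A2 (K *m s) = K *m ainv A1 s.
Proof.
move=> [Ku [Km K1]] hs; have [h1 h2] := ainvP hs.
have e1 : amul A2 (K *m s) (K *m ainv A1 s) = aone A2 by rewrite -Km h1.
have e2 : amul A2 (K *m ainv A1 s) (K *m s) = aone A2 by rewrite -Km h2.
split; first by exists (K *m ainv A1 s).
exact: ainv_uniq.
Qed.

Lemma main_dir (R : realType) n (hn : (0 < n)%N) (A1 A2 : algebra R n) K L1 :
  alg_iso A1 A2 K -> uncurling_metric A1 L1 ->
  uncurling_metric A2 ((invmx K)^T *m L1 *m invmx K).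
Proof.
move=> iso [L1s [r [r0 [hU hC]]]].
set N := invmx K.
have isoN := iso_inv iso.
have [Ku [Km K1]] := iso; have [Nu [Nm N1]] := isoN; rewrite -/N in Nu Nm N1.
split; first by rewrite !trmx_mul trmxK L1s mulmxA.
have m0 : (0 : R) < n%:R by rewrite ltr0n.
have c0 := cM_ge0 N.
pose r2 := r / (n%:R * n%:R * (cM N + 1)).
have r20 : 0 < r2 by rewrite /r2 divr_gt0 // !mulr_gt0 //; lra.
have ent : forall (M M' : 'cV[R]_n) i, (M - M') i 0 = M i 0 - M' i 0 by move=> M M' i; rewrite !mxE.
have hball : forall s', eball (aone A2) r2 s' -> eball (aone A1) r (N *m s').
  move=> s' hs'; have hc := eball_coord r20 hs'.
  have -> : r = r / n%:R * n%:R by rewrite divfK // gt_eqF.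
  apply: (@coord_eball R n (aone A1) (N *m s') (r / n%:R) hn) => i.
  rewrite -N1 -ent -mulmxBr; apply: le_lt_trans (entry_bound _ _ _) _.
  have hn2 : nrm (s' - aone A2) <= n%:R * r2.
    have -> : n%:R * r2 = \sum_(j < n) r2 by rewrite sumr_const card_ord mulr_natl.
    apply: ler_sum => j _.
    by rewrite ent; exact: ltW.
  apply: (@le_lt_trans _ _ (cM N * (n%:R * r2))); first exact: ler_wpM2l.
  rewrite ltr_pdivlMr //.
  have e : r = r2 * (n%:R * n%:R * (cM N + 1)) by rewrite /r2 divfK // gt_eqF // !mulr_gt0 //; lra.
  rewrite [X in _ < X]e; nra.
have hU2 : forall s', eball (aone A2) r2 s' -> is_unit A2 s'.
  move=> s' hs'; have := (iso_ainv iso (hU _ (hball _ hs'))).1.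
  by rewrite /N mulKVmx.
exists r2; split => //; split => // s' hs' i j.
set s := N *m s'.
have hs := hball _ hs'.
have hs'E : s' = K *m s by rewrite /s /N mulKVmx.
set u1 := ainv A1 s.
have uE : ainv A2 s' = K *m u1 by rewrite hs'E (iso_ainv iso (hU _ hs)).2.
pose M1 := L1 *m Rm A1 u1 *m Lm A1 u1.
have M1E : forall x, M1 *m x = L1 *m amul A1 (amul A1 u1 x) u1.
  by move=> x; rewrite /M1 -!mulmxA LmE RmE.
have M1s : M1^T = M1.
  apply/matrixP => a b; rewrite mxE.
  have [_ [_ eq1]] := hC s hs a b.
  rewrite (pderiv_inv L1 hU hs a b).2 (pderiv_inv L1 hU hs b a).2 in eq1.
  move/eqP: eq1; rewrite eqr_opp => /eqP.
  by rewrite -/u1 -!M1E -!colE !mxE => ->.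
pose L2 := N^T *m L1 *m N.
pose M2 := L2 *m Rm A2 (K *m u1) *m Lm A2 (K *m u1).
have M2E : forall x, M2 *m x = L2 *m amul A2 (amul A2 (K *m u1) x) (K *m u1).
  by move=> x; rewrite /M2 -!mulmxA LmE RmE.
have M2M1 : M2 = N^T *m M1 *m N.
  apply: mx_ext => x; rewrite M2E.
  have -> : x = K *m (N *m x) by rewrite /N mulKVmx.
  rewrite -Km -Km /L2 -!mulmxA /N !mulKmx //.
  by rewrite LmE RmE.
have M2s : M2^T = M2 by rewrite M2M1 trmx_mul trmx_mul trmxK M1s mulmxA.
have [d1 e1] := pderiv_inv L2 hU2 hs' i j.
have [d2 e2] := pderiv_inv L2 hU2 hs' j i.
split => //; split => //.
rewrite e1 e2 uE -!M2E -!colE.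
clearbody M2.
by rewrite !mxE -{1}M2s mxE.
Qed.

Theorem theorem2p2 (R : realType) (n : nat) (hn : (0 < n)%N)
    (A1 A2 : algebra R n) (K : 'M[R]_n) :
  alg_iso A1 A2 K ->
  forall L1 : 'M[R]_n,
    uncurling_metric A1 L1 <->
    exists L2 : 'M[R]_n, uncurling_metric A2 L2 /\ L1 = K^T *m L2 *m K.
Proof.
move=> iso L1; have [Ku _] := iso; split.
  move=> h; exists ((invmx K)^T *m L1 *m invmx K); split; first by have := main_dir hn iso h; apply.
  by rewrite !mulmxA -trmx_mul mulVmx // trmx1 mul1mx -mulmxA mulVmx // mulmx1.
move=> [L2 [h ->]].
have := main_dir hn (iso_inv iso) h.
by rewrite invmxK; apply.
Qed.
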